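(* For every $p\ge2$ and $\alpha\ge0$, the following hold in $\mathbb R^N\setminus\{0\}$: \[ \mathcal L_pd=\frac{(Q-1)|\nabla_{\mathcal L}d|^p}{d},\qquad \nabla_{\mathcal L}|\nabla_{\mathcal L}d|\cdot\nabla_{\mathcal L}d=0,\qquad \operatorname{div}_{\mathcal L}\Big(\frac{|\nabla_{\mathcal L}d|^{\alpha+p-2}\nabla_{\mathcal L}d}{d^{Q-1}}\Big)=0. \]
   Context: Vector fields and operators. On $\mathbb R^N$ take $h\le N$ vector fields $X_i=\sum_{j=1}^N\sigma_{i,j}\partial_{x_j}$ with $\sigma_{i,j},\partial_{x_j}\sigma_{i,j}\in C(\mathbb R^N)$. Let $\sigma=(\sigma_{i,j})$ and $\nabla_{\mathcal L}=(X_1,\dots,X_h)=\sigma\nabla$. Set $\operatorname{div}_{\mathcal L}Z=\operatorname{div}(\sigma^TZ)$ and $\mathcal L_pu=\operatorname{div}_{\mathcal L}(|\nabla_{\mathcal L}u|^{p-2}\nabla_{\mathcal L}u)$. Dilations. There are dilations $\delta_\lambda(x)=(\lambda^{\beta_1}x_1,\dots,\lambda^{\beta_N}x_N)$, $\beta_j>0$, with each $X_i$ homogeneous of degree one: $X_i(f\circ\delta_\lambda)=\lambda(X_if)\circ\delta_\lambda$. Set $Q=\sum_j\beta_j$. The function $d$. $d:\mathbb R^N\to[0,\infty)$ satisfies: (i) $d\in C(\mathbb R^N)\cap C^\infty(\mathbb R^N\setminus\{0\})$; (ii) $d(x)=0$ iff $x=0$; (iii) $d(\delta_\lambda x)=\lambda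 d(x)$; (iv) for every $p\ge2$, $\mathcal L_p(d^{(p-Q)/(p-1)})=0$ in $\mathbb R^N\setminus\{0\}$ if $p\neq Q$, and $\mathcal L_Q(-\ln d)=0$ there if $p=Q$. *)

(* Defs.v *)
From HB Require Import structures.
From mathcomp Require Import all_boot all_order all_algebra.
From mathcomp Require Import all_classical all_reals all_analysis.
Set Implicit Arguments. Unset Strict Implicit. Unset Printing Implicit Defensive.
Import Order.TTheory GRing.Theory Num.Theory.
Import numFieldNormedType.Exports.
Local Open Scope classical_set_scope.
Local Open Scope ring_scope.

(* Points of R^N are row vectors 'rV[R]_N; coordinate j of x is x 0 j. *)

Definition ej (R : realType) (N : nat) (j : 'I_N) : 'rV[R]_N := delta_mx 0 j.

Definition pd (R : realType) (N : nat) (j : 'I_N) (f : 'rV[R]_N -> R)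
  : 'rV[R]_N -> R := fun x => derive f x (ej R j).

Definition iter_pd (R : realType) (N : nat) (js : seq 'I_N) (f : 'rV[R]_N -> R)
  : 'rV[R]_N -> R := foldr (fun j g => pd j g) f js.

Definition Cinf_on (R : realType) (N : nat) (U : set 'rV[R]_N) (f : 'rV[R]_N -> R) :=
  forall js : seq 'I_N, forall x, U x ->
    {for x, continuous (iter_pd js f)} /\
    (forall j : 'I_N, derivable (iter_pd js f) x (ej R j)).

Definition C1_partials (R : realType) (N : nat) (f : 'rV[R]_N -> R) :=
  continuous f /\
  (forall (j : 'I_N) x, derivable f x (ej R j)) /\
  (forall j : 'I_N, continuous (pd j f)).

Definition Xfield (R : realType) (h N : nat) (sigma : 'I_h -> 'I_N -> 'rV[R]_N -> R)
  (i : 'I_h) (f : 'rV[R]_N -> R) : 'rV[R]_N -> R :=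
  fun x => \sum_(j < N) sigma i j x * pd j f x.

Definition gradL (R : realType) (h N : nat) (sigma : 'I_h -> 'I_N -> 'rV[R]_N -> R)
  (f : 'rV[R]_N -> R) : 'rV[R]_N -> 'rV[R]_h :=
  fun x => \row_(i < h) Xfield sigma i f x.

Definition divL (R : realType) (h N : nat) (sigma : 'I_h -> 'I_N -> 'rV[R]_N -> R)
  (Z : 'rV[R]_N -> 'rV[R]_h) : 'rV[R]_N -> R :=
  fun x => \sum_(j < N) pd j (fun y => \sum_(i < h) sigma i j y * Z y 0 i) x.

Definition enorm (R : realType) (n : nat) (v : 'rV[R]_n) : R :=
  Num.sqrt (\sum_(i < n) v 0 i ^+ 2).
Definition edot (R : realType) (n : nat) (u v : 'rV[R]_n) : R :=
  \sum_(i < n) u 0 i * v 0 i.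

Definition Lp (R : realType) (h N : nat) (sigma : 'I_h -> 'I_N -> 'rV[R]_N -> R)
  (p : R) (u : 'rV[R]_N -> R) : 'rV[R]_N -> R :=
  divL sigma (fun y => powR (enorm (gradL sigma u y)) (p - 2) *: gradL sigma u y).

Definition dil (R : realType) (N : nat) (beta : 'I_N -> R) (lam : R)
  (x : 'rV[R]_N) : 'rV[R]_N :=
  \row_(j < N) (powR lam (beta j) * x 0 j).

(* Main.v *)
Require Import Defs.
From HB Require Import structures.
From mathcomp Require Import all_boot all_order all_algebra.
From mathcomp Require Import all_classical all_reals all_analysis.
From mathcomp Require Import ring lra.
Import Order.TTheory GRing.Theory Num.Theory.
Import numFieldNormedType.Exports.
Local Open Scope classical_set_scope.
Local Open Scope ring_scope.
Set Implicit Arguments. Unset Strict Implicit. Unset Printing Implicit Defensive.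

Lemma derive_line (R : realType) n (f : 'rV[R]_n -> R) x v :
  derive f x v = derive (fun t : R => f (t *: v + x)) 0 1.
Proof.
rewrite /derive; congr lim.
suff -> : (fun h : R => h^-1 *: ((f \o shift x) (h *: v) - f x)) =
  (fun h : R => h^-1 *: (((fun t : R => f (t *: v + x)) \o shift 0) (h *: 1) - (fun t : R => f (t *: v + x)) 0)) by [].
by apply/funext => h /=; rewrite addr0 scale0r add0r [_%:A]mulr1.
Qed.

Lemma is_derive_chain (R : realType) n (f : 'rV[R]_n -> R) (phi : R -> R) x v df dphi :
  is_derive x v f df -> is_derive (f x) 1 phi dphi -> is_derive x v (phi \o f) (dphi * df).
Proof.
move=> [f1 f2] [p1 p2].
have g1 : derivable (fun t : R => f (t *: v + x)) 0 1 by apply/(derivable1P f x v).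
have e0 : (fun t : R => f (t *: v + x)) 0 = f x by rewrite scale0r add0r.
have p1' : derivable phi ((fun t : R => f (t *: v + x)) 0) 1 by rewrite e0.
split.
  apply/derivable1P => /=.
  apply/derivable1_diffP; apply: (@differentiable_comp _ _ _ _ (fun t : R => f (t *: v + x)) phi).
    exact/derivable1_diffP.
  exact/derivable1_diffP.
rewrite derive_line -derive1E.
have -> : (fun t : R => (phi \o f) (t *: v + x)) = phi \o (fun t : R => f (t *: v + x)) by [].
rewrite derive1_comp // !derive1E e0 p2 -derive_line f2 //.
Qed.

Lemma pd_near (R : realType) n (j : 'I_n) (f g : 'rV[R]_n -> R) x :
  (\forall y \near x, f y = g y) -> pd j f x = pd j g x.
Proof. by move=> H; rewrite /pd; apply: near_eq_derive. Qed.

Lemma pdM (R : realType) n (j : 'I_n) (f g : 'rV[R]_n -> R) x :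
  derivable f x (ej R j) -> derivable g x (ej R j) ->
  pd j (fun y => f y * g y) x = f x * pd j g x + g x * pd j f x.
Proof.
move=> df dg; rewrite /pd.
have -> : (fun y => f y * g y) = (f * g)%R by [].
by rewrite deriveM.
Qed.

Lemma derivableM' (R : realType) n (f g : 'rV[R]_n -> R) x v :
  derivable f x v -> derivable g x v -> derivable (fun y => f y * g y) x v.
Proof.
move=> df dg; have -> : (fun y => f y * g y) = (f * g)%R by [].
exact: derivableM.
Qed.

Lemma derivable_sum' (R : realType) n m (F : 'I_m -> 'rV[R]_n -> R) x v :
  (forall i, derivable (F i) x v) -> derivable (fun y => \sum_(i < m) F i y) x v.
Proof.
move=> H.
have -> : (fun y => \sum_(i < m) F i y) = \sum_(i < m) F i.
  by apply/funext => y; rewrite fct_sumE.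
exact: derivable_sum.
Qed.

Lemma derive_sum' (R : realType) n m (F : 'I_m -> 'rV[R]_n -> R) x v :
  (forall i, derivable (F i) x v) ->
  derive (fun y => \sum_(i < m) F i y) x v = \sum_(i < m) derive (F i) x v.
Proof.
move=> H.
have -> : (fun y => \sum_(i < m) F i y) = \sum_(i < m) F i.
  by apply/funext => y; rewrite fct_sumE.
by rewrite derive_sum.
Qed.

Lemma pd_chain (R : realType) n (j : 'I_n) (f : 'rV[R]_n -> R) (phi : R -> R) x dphi :
  derivable f x (ej R j) -> is_derive (f x) 1 phi dphi ->
  derivable (phi \o f) x (ej R j) /\ pd j (phi \o f) x = dphi * pd j f x.
Proof.
move=> df dp.
have H := is_derive_chain (derivableP df) dp.
by split; [exact: ex_derive|rewrite /pd derive_val].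
Qed.

Lemma Xfield_chain (R : realType) h n (sigma : 'I_h -> 'I_n -> 'rV[R]_n -> R)
  (f : 'rV[R]_n -> R) (phi : R -> R) y dphi i :
  (forall j, derivable f y (ej R j)) -> is_derive (f y) 1 phi dphi ->
  Xfield sigma i (phi \o f) y = dphi * Xfield sigma i f y.
Proof.
move=> df dp; rewrite /Xfield mulr_sumr; apply: eq_bigr => j _.
by rewrite (pd_chain (df j) dp).2 mulrCA.
Qed.

Lemma gradL_chain (R : realType) h n (sigma : 'I_h -> 'I_n -> 'rV[R]_n -> R)
  (f : 'rV[R]_n -> R) (phi : R -> R) y dphi :
  (forall j, derivable f y (ej R j)) -> is_derive (f y) 1 phi dphi ->
  gradL sigma (phi \o f) y = dphi *: gradL sigma f y.
Proof.
by move=> df dp; apply/rowP => i; rewrite !mxE (Xfield_chain _ _ df dp).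
Qed.

Lemma XfieldM (R : realType) h n (sigma : 'I_h -> 'I_n -> 'rV[R]_n -> R)
  (f g : 'rV[R]_n -> R) x i :
  (forall j, derivable f x (ej R j)) -> (forall j, derivable g x (ej R j)) ->
  Xfield sigma i (fun y => f y * g y) x =
  f x * Xfield sigma i g x + g x * Xfield sigma i f x.
Proof.
move=> df dg; rewrite /Xfield !mulr_sumr -big_split /=; apply: eq_bigr => j _.
by rewrite pdM // mulrDr mulrCA [_ * (g x * _)]mulrCA.
Qed.

Lemma gradLM (R : realType) h n (sigma : 'I_h -> 'I_n -> 'rV[R]_n -> R)
  (f g : 'rV[R]_n -> R) x :
  (forall j, derivable f x (ej R j)) -> (forall j, derivable g x (ej R j)) ->
  gradL sigma (fun y => f y * g y) x =
  f x *: gradL sigma g x + g x *: gradL sigma f x.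
Proof.
by move=> df dg; apply/rowP => i; rewrite !mxE XfieldM.
Qed.

Lemma edotDl (R : realType) m (u w v : 'rV[R]_m) : edot (u + w) v = edot u v + edot w v.
Proof. by rewrite /edot -big_split; apply: eq_bigr => i _; rewrite mxE mulrDl. Qed.

Lemma edotZl (R : realType) m (a : R) (u v : 'rV[R]_m) : edot (a *: u) v = a * edot u v.
Proof. by rewrite /edot mulr_sumr; apply: eq_bigr => i _; rewrite mxE mulrA. Qed.

Lemma edotZr (R : realType) m (a : R) (u v : 'rV[R]_m) : edot u (a *: v) = a * edot u v.
Proof. by rewrite /edot mulr_sumr; apply: eq_bigr => i _; rewrite mxE mulrCA. Qed.

Lemma edot0r (R : realType) m (u : 'rV[R]_m) : edot u 0 = 0.
Proof. by rewrite /edot big1 // => i _; rewrite mxE mulr0. Qed.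

Lemma enorm_ge0 (R : realType) m (u : 'rV[R]_m) : 0 <= enorm u.
Proof. exact: sqrtr_ge0. Qed.

Lemma edot_self (R : realType) m (u : 'rV[R]_m) : edot u u = enorm u ^+ 2.
Proof.
rewrite /enorm sqr_sqrtr; last by apply: sumr_ge0 => i _; exact: sqr_ge0.
by rewrite /edot; apply: eq_bigr => i _; rewrite expr2.
Qed.

Lemma enormZ (R : realType) m (a : R) (u : 'rV[R]_m) : enorm (a *: u) = `|a| * enorm u.
Proof.
rewrite /enorm -sqrtr_sqr -sqrtrM ?sqr_ge0 //; congr Num.sqrt.
by rewrite mulr_sumr; apply: eq_bigr => i _; rewrite mxE exprMn.
Qed.

Lemma enorm_eq0 (R : realType) m (u : 'rV[R]_m) : enorm u = 0 -> u = 0.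
Proof.
move=> /eqP; rewrite /enorm sqrtr_eq0 => H.
have H0 : \sum_(i < m) u 0 i ^+ 2 = 0.
  by apply/eqP; rewrite eq_le H /=; apply: sumr_ge0 => i _; exact: sqr_ge0.
apply/rowP => i; rewrite mxE; apply/eqP; rewrite -sqrf_eq0; apply/eqP.
move/eqP: H0; rewrite psumr_eq0; last by move=> k _; exact: sqr_ge0.
by move=> /allP /(_ i (mem_index_enum _)) /implyP /(_ isT) /eqP.
Qed.

Lemma divL_scale (R : realType) h n (sigma : 'I_h -> 'I_n -> 'rV[R]_n -> R)
  (g : 'rV[R]_n -> R) (Z : 'rV[R]_n -> 'rV[R]_h) x :
  (forall j, derivable g x (ej R j)) ->
  (forall j, derivable (fun y => \sum_(i < h) sigma i j y * Z y 0 i) x (ej R j)) ->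
  divL sigma (fun y => g y *: Z y) x = g x * divL sigma Z x + edot (gradL sigma g x) (Z x).
Proof.
move=> dg dZ; rewrite /divL.
have E : forall j, (fun y => \sum_(i < h) sigma i j y * (g y *: Z y) 0 i) =
    (fun y => g y * (\sum_(i < h) sigma i j y * Z y 0 i)).
  move=> j; apply/funext => y; rewrite mulr_sumr; apply: eq_bigr => i _.
  by rewrite mxE mulrCA.
rewrite (eq_bigr (fun j => g x * pd j (fun y => \sum_(i < h) sigma i j y * Z y 0 i) x
   + (\sum_(i < h) sigma i j x * Z x 0 i) * pd j g x)); last first.
  by move=> j _; rewrite E pdM.
rewrite big_split /= -mulr_sumr; congr (_ + _).
rewrite /edot.
rewrite (eq_bigr (fun j => \sum_(i < h) sigma i j x * Z x 0 i * pd j g x)); last first.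
  by move=> j _; rewrite mulr_suml.
rewrite exchange_big /=; apply: eq_bigr => i _.
rewrite mxE /Xfield mulr_suml; apply: eq_bigr => j _.
by rewrite mulrAC.
Qed.

Lemma line_cont (R : realType) n (f : 'rV[R]_n -> R) x v :
  derivable f x v -> (fun t : R => f (t *: v + x)) @ 0^' --> f x.
Proof.
move=> /derivable1P/derivable1_diffP/differentiable_continuous H.
have E : f x = (fun t : R => f (t *: v + x)) 0 by rewrite scale0r add0r.
rewrite E; apply: cvg_trans H; apply: cvg_app; exact: cvg_within.
Qed.

Lemma powR_cvg0' (R : realType) T (F : set_system T) (FF : Filter F) (f : T -> R) s :
  0 < s -> (forall t, 0 <= f t) -> f @ F --> 0 -> (fun t => powR (f t) s) @ F --> 0.
Proof.
move=> s0 f0 /cvgr0Pnorm_lt fc; apply/cvgr0Pnorm_lt => e e0.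
have := fc (e `^ s^-1) (powR_gt0 _ e0); apply: filterS => t.
rewrite !ger0_norm ?powR_ge0 // => ht.
have := gt0_ltr_powR s0 (f0 t) (powR_ge0 e (s^-1)) ht.
by rewrite -powRrM mulVf ?gt_eqF // powRr1 // ltW.
Qed.

Lemma deriveM0 (R : realType) n (g S : 'rV[R]_n -> R) x v :
  derivable S x v -> S x = 0 ->
  (fun t : R => g (t *: v + x)) @ 0^' --> g x ->
  derive (fun y => g y * S y) x v = g x * derive S x v.
Proof.
move=> dS S0 gc; rewrite /derive.
have -> : (fun h : R => h^-1 *: (((fun y => g y * S y) \o shift x) (h *: v) - g x * S x))
  = (fun h : R => g (h *: v + x)) \* (fun h : R => h^-1 *: ((S \o shift x) (h *: v) - S x)).
  apply/funext => h /=; rewrite S0 mulr0 subr0 subr0.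
  by rewrite /GRing.scale /= mulrCA.
exact: (cvg_lim _ (cvgM gc dS)).
Qed.

Lemma divL_scale0 (R : realType) h n (sigma : 'I_h -> 'I_n -> 'rV[R]_n -> R)
  (g : 'rV[R]_n -> R) (Z : 'rV[R]_n -> 'rV[R]_h) x :
  (forall j, derivable (fun y => \sum_(i < h) sigma i j y * Z y 0 i) x (ej R j)) ->
  Z x = 0 ->
  (forall j, (fun t : R => g (t *: ej R j + x)) @ 0^' --> g x) ->
  divL sigma (fun y => g y *: Z y) x = g x * divL sigma Z x.
Proof.
move=> dZ Z0 gc; rewrite /divL mulr_sumr; apply: eq_bigr => j _.
have -> : (fun y => \sum_(i < h) sigma i j y * (g y *: Z y) 0 i) =
    (fun y => g y * (\sum_(i < h) sigma i j y * Z y 0 i)).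
  apply/funext => y; rewrite mulr_sumr; apply: eq_bigr => i _.
  by rewrite mxE mulrCA.
rewrite /pd deriveM0 //.
by rewrite Z0 big1 // => i _; rewrite mxE mulr0.
Qed.

Lemma divL_loc (R : realType) h n (sigma : 'I_h -> 'I_n -> 'rV[R]_n -> R)
  (Z1 Z2 : 'rV[R]_n -> 'rV[R]_h) x :
  (\forall y \near x, Z1 y = Z2 y) -> divL sigma Z1 x = divL sigma Z2 x.
Proof.
move=> H; rewrite /divL; apply: eq_bigr => j _; apply: pd_near.
by apply: filterS H => y ->.
Qed.

Lemma d_der (R : realType) n (d : 'rV[R]_n -> R) x j :
  Cinf_on [set x | x != 0] d -> x != 0 -> derivable d x (ej R j).
Proof. by move=> Hd x0; exact: ((Hd [::] x x0).2 j). Qed.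

Lemma pdd_der (R : realType) n (d : 'rV[R]_n -> R) x k j :
  Cinf_on [set x | x != 0] d -> x != 0 -> derivable (pd k d) x (ej R j).
Proof. by move=> Hd x0; exact: ((Hd [:: k] x x0).2 j). Qed.

Lemma X_der (R : realType) h n (sigma : 'I_h -> 'I_n -> 'rV[R]_n -> R)
  (d : 'rV[R]_n -> R) x i j :
  (forall i j, C1_partials (sigma i j)) ->
  Cinf_on [set x | x != 0] d -> x != 0 -> derivable (Xfield sigma i d) x (ej R j).
Proof.
move=> Hs Hd x0; rewrite /Xfield.
apply: derivable_sum' => k; apply: derivableM'.
  exact: ((Hs i k).2.1 j x).
exact: pdd_der.
Qed.

Lemma G_der (R : realType) h n (sigma : 'I_h -> 'I_n -> 'rV[R]_n -> R)
  (d : 'rV[R]_n -> R) x i j :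
  (forall i j, C1_partials (sigma i j)) ->
  Cinf_on [set x | x != 0] d -> x != 0 ->
  derivable (fun y => gradL sigma d y 0 i) x (ej R j).
Proof.
move=> Hs Hd x0.
have -> : (fun y => gradL sigma d y 0 i) = Xfield sigma i d.
  by apply/funext => y; rewrite mxE.
exact: X_der.
Qed.

Lemma nG_der (R : realType) h n (sigma : 'I_h -> 'I_n -> 'rV[R]_n -> R)
  (d : 'rV[R]_n -> R) x j :
  (forall i j, C1_partials (sigma i j)) ->
  Cinf_on [set x | x != 0] d -> x != 0 -> 0 < enorm (gradL sigma d x) ->
  derivable (fun y => enorm (gradL sigma d y)) x (ej R j).
Proof.
move=> Hs Hd x0 np.
pose S := fun y => \sum_(i < h) gradL sigma d y 0 i ^+ 2.
have -> : (fun y => enorm (gradL sigma d y)) = Num.sqrt \o S by [].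
have dS : derivable S x (ej R j).
  apply: derivable_sum' => i; rewrite /=.
  have -> : (fun y => gradL sigma d y 0 i ^+ 2) =
     (fun y => gradL sigma d y 0 i * gradL sigma d y 0 i).
    by apply/funext => y; rewrite expr2.
  by apply: derivableM'; exact: G_der.
have Sp : 0 < S x by move: np; rewrite /enorm sqrtr_gt0.
exact: (pd_chain dS (is_derive1_sqrt Sp)).1.
Qed.

Lemma powR_der (R : realType) n (f : 'rV[R]_n -> R) x v s :
  derivable f x v -> 0 < f x -> derivable (fun y => powR (f y) s) x v.
Proof.
move=> df fp.
have -> : (fun y => powR (f y) s) = (fun t => powR t s) \o f by [].
have := is_derive_chain (derivableP df) (@is_derive1_powR R s _ fp).
by case.
Qed.

Lemma W_der (R : realType) h n (sigma : 'I_h -> 'I_n -> 'rV[R]_n -> R)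
  (d : 'rV[R]_n -> R) x (g : 'rV[R]_n -> R) j :
  (forall i j, C1_partials (sigma i j)) ->
  Cinf_on [set x | x != 0] d -> x != 0 ->
  derivable g x (ej R j) ->
  derivable (fun y => \sum_(i < h) sigma i j y * (g y *: gradL sigma d y) 0 i) x (ej R j).
Proof.
move=> Hs Hd x0 dg.
apply: derivable_sum' => i.
have -> : (fun y => sigma i j y * (g y *: gradL sigma d y) 0 i) =
   (fun y => sigma i j y * (g y * gradL sigma d y 0 i)).
  by apply/funext => y; rewrite mxE.
apply: derivableM'; first exact: ((Hs i j).2.1 j x).
by apply: derivableM' => //; exact: G_der.
Qed.

Lemma is_derive_cpowR (R : realType) (c r t : R) : 0 < t ->
  is_derive t 1 (fun u : R => c * powR u r) (c * (r * powR t (r - 1))).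
Proof.
move=> t0; have := is_deriveZ c (@is_derive1_powR R r t t0).
by [].
Qed.

Lemma is_derive_nln (R : realType) (t : R) : 0 < t ->
  is_derive t 1 (fun u : R => - ln u) (- t^-1).
Proof.
move=> t0; have := is_deriveN (is_derive1_ln t0).
by [].
Qed.

Lemma powR_p2 (R : realType) (a p : R) : 0 <= a -> 2 <= p ->
  powR a (p - 2) * a ^+ 2 = powR a p.
Proof.
move=> a0 p2; have [->|an0] := eqVneq a 0.
  by rewrite expr0n /= mulr0 powR0 // gt_eqF // (lt_le_trans _ p2).
by rewrite -(powR_mulrn 2 a0) -powRD ?an0 ?implybT // subrK.
Qed.

Lemma near_ne0 (R : realType) n (d : 'rV[R]_n -> R) (x : 'rV[R]_n) :
  (forall y, d y = 0 <-> y = 0) -> (forall y, 0 <= d y) -> continuous d -> x != 0 ->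
  \forall y \near x, y != 0.
Proof.
move=> Hd0 Hdge cd x0.
have dx : 0 < d x.
  by rewrite lt_neqAle Hdge andbT eq_sym; apply/eqP => /Hd0 /eqP; rewrite (negPf x0).
have H : \forall y \near x, 0 < d y.
  have := @cvgr_gt; move=> H; exact: (H _ _ _ _ _ _ (cd x) 0 dx).
apply: filterS H => y dy; apply/eqP => y0.
by move: dy; rewrite y0 (proj2 (Hd0 0) erefl) ltxx.
Qed.


Lemma powRD' (R : realType) (x r s : R) : 0 < x -> x `^ (r + s) = x `^ r * x `^ s.
Proof. by move=> x0; apply: powRD; apply/implyP => _; rewrite gt_eqF. Qed.

Lemma K1 (R : realType) h n (sigma : 'I_h -> 'I_n -> 'rV[R]_n -> R)
  (d : 'rV[R]_n -> R) (Q p : R) (x : 'rV[R]_n) :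
  (forall i j, C1_partials (sigma i j)) -> Cinf_on [set x | x != 0] d ->
  (forall y, d y = 0 <-> y = 0) -> (forall y, 0 <= d y) -> continuous d ->
  2 <= p -> x != 0 ->
  (p != Q -> Lp sigma p (fun y => powR (d y) ((p - Q) / (p - 1))) x = 0) ->
  (p = Q -> Lp sigma Q (fun y => - ln (d y)) x = 0) ->
  (forall j, derivable (fun y => powR (enorm (gradL sigma d y)) (p - 2)) x (ej R j)) ->
  Lp sigma p d x = (Q - 1) * powR (enorm (gradL sigma d x)) p / d x.
Proof.
move=> Hs Hd Hd0 Hdge cd p2 x0 HA HB dg.
have dpos y : y != 0 -> 0 < d y.
  by move=> y0; rewrite lt_neqAle Hdge andbT eq_sym; apply/eqP => /Hd0 /eqP; rewrite (negPf y0).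
have nx := near_ne0 Hd0 Hdge cd x0.
have p1 : p - 1 != 0.
  by rewrite gt_eqF // subr_gt0 (lt_le_trans _ p2) // ltr1n.
pose G := gradL sigma d.
pose F := fun y => powR (enorm (G y)) (p - 2) *: G y.
have [c [c0 Hc]] : exists c, c != 0 /\
    divL sigma (fun y => (c * powR (d y) (1 - Q)) *: F y) x = 0.
  have [pQ|pQ] := eqVneq p Q.
    exists (-1); split; first by rewrite oppr_eq0 oner_eq0.
    rewrite -(HB pQ) /Lp -pQ; apply: divL_loc; apply: filterS nx => y y0.
    have Hg := @gradL_chain R h n sigma d (fun u => - ln u) y _ (fun j => d_der (j:=j) Hd y0)
      (is_derive_nln (dpos y y0)).
    rewrite /= in Hg; rewrite Hg /F /G enormZ normrN normfV ger0_norm ?Hdge //.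
    rewrite powRM ?invr_ge0 ?Hdge ?enorm_ge0 // !scalerA; congr (_ *: _).
    have E : (d y)^-1 `^ (p - 2) * (d y)^-1 = d y `^ (1 - p).
      rewrite -(powR_inv1 (Hdge y)) -powRrM -powRD' ?dpos //.
      by congr (powR _ _); ring.
    rewrite -E; ring.
  have [a Ha] : exists a, a = (p - Q) / (p - 1) by eexists.
  have a0 : a != 0 by rewrite Ha mulf_neq0 ?invr_eq0 // subr_eq0.
  exists (powR `|a| (p - 2) * a); split.
    by rewrite mulf_neq0 // gt_eqF // powR_gt0 // normr_gt0.
  rewrite -(HA pQ) /Lp -Ha; apply: divL_loc; apply: filterS nx => y y0.
  have Hg := @gradL_chain R h n sigma d (fun u => powR u a) y _ (fun j => d_der (j:=j) Hd y0)
      (@is_derive1_powR R a _ (dpos y y0)).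
  rewrite /= in Hg; rewrite Hg /F /G enormZ !scalerA; congr (_ *: _).
  have Ek : `|a * d y `^ (a - 1)| = `|a| * d y `^ (a - 1).
    by rewrite normrM [`|d y `^ _|]ger0_norm ?powR_ge0.
  rewrite Ek powRM ?mulr_ge0 ?normr_ge0 ?powR_ge0 ?enorm_ge0 //.
  rewrite powRM ?normr_ge0 ?powR_ge0 // -powRrM.
  have E2 : d y `^ (1 - Q) = d y `^ ((a - 1) * (p - 2)) * d y `^ (a - 1).
    by rewrite -powRD' ?dpos //; congr (powR _ _); rewrite Ha; field.
  rewrite E2; ring.
have dgx : forall j, derivable (fun y => c * d y `^ (1 - Q)) x (ej R j).
  move=> j; exact: (pd_chain (d_der (j:=j) Hd x0) (is_derive_cpowR c (1 - Q) (dpos x x0))).1.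
have dF : forall j, derivable (fun y => \sum_(i < h) sigma i j y * F y 0 i) x (ej R j).
  by move=> j; exact: (W_der Hs Hd x0 (dg j)).
rewrite divL_scale // in Hc.
have Hg : gradL sigma (fun y => c * d y `^ (1 - Q)) x =
    (c * ((1 - Q) * d x `^ (1 - Q - 1))) *: G x.
  exact: (@gradL_chain R h n sigma d (fun u => c * powR u (1 - Q)) x _ (fun j => d_der (j:=j) Hd x0) (is_derive_cpowR c (1 - Q) (dpos x x0))).
rewrite Hg /F edotZl edotZr edot_self powR_p2 ?enorm_ge0 // in Hc.
have -> : Lp sigma p d x = divL sigma F x by [].
have Ed : d x `^ (1 - Q) = d x `^ (1 - Q - 1) * d x.
  by rewrite -{3}(powRr1 (Hdge x)) -powRD' ?dpos // subrK.
rewrite Ed in Hc.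
have e0 : d x `^ (1 - Q - 1) != 0 by rewrite gt_eqF // powR_gt0 // dpos.
have dx0 : d x != 0 by rewrite gt_eqF // dpos.
have : c * d x `^ (1 - Q - 1) * (d x * divL sigma F x - (Q - 1) * enorm (G x) `^ p) = 0.
  by rewrite -Hc; ring.
move=> /eqP; rewrite !mulf_eq0 (negPf c0) (negPf e0) /= subr_eq0 => /eqP E.
by apply: (mulfI dx0); rewrite E [RHS]mulrC divfK.
Qed.

Lemma G_comp_der (R : realType) h n (sigma : 'I_h -> 'I_n -> 'rV[R]_n -> R)
  (d : 'rV[R]_n -> R) (x : 'rV[R]_n) j :
  (forall i j, C1_partials (sigma i j)) ->
  Cinf_on [set x | x != 0] d -> x != 0 ->
  derivable (fun y => \sum_(i < h) sigma i j y * gradL sigma d y 0 i) x (ej R j).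
Proof.
move=> Hs Hd x0.
have -> : (fun y => \sum_(i < h) sigma i j y * gradL sigma d y 0 i) =
    (fun y => \sum_(i < h) sigma i j y * ((fun _ => (1 : R)) y *: gradL sigma d y) 0 i).
  by apply/funext => y; apply: eq_bigr => i _; rewrite scale1r.
exact: (W_der Hs Hd x0 (derivable_cst (1 : R) x (ej R j))).
Qed.

Lemma nG_line (R : realType) h n (sigma : 'I_h -> 'I_n -> 'rV[R]_n -> R)
  (d : 'rV[R]_n -> R) (x : 'rV[R]_n) j :
  (forall i j, C1_partials (sigma i j)) ->
  Cinf_on [set x | x != 0] d -> x != 0 ->
  (fun t : R => enorm (gradL sigma d (t *: ej R j + x))) @ 0^' --> enorm (gradL sigma d x).
Proof.
move=> Hs Hd x0.
pose S := fun y => \sum_(i < h) gradL sigma d y 0 i ^+ 2.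
have dS : derivable S x (ej R j).
  apply: derivable_sum' => i; rewrite /=.
  have -> : (fun y => gradL sigma d y 0 i ^+ 2) =
     (fun y => gradL sigma d y 0 i * gradL sigma d y 0 i).
    by apply/funext => y; rewrite expr2.
  by apply: derivableM'; exact: G_der.
have := cvg_comp _ _ (line_cont dS) (@sqrt_continuous R (S x)).
by [].
Qed.

Lemma alg3 (R : realType) (A e dd q n m u : R) : dd != 0 ->
  A * (e * dd) * ((q - 1) * n ^+ 2 / dd) + (A * ((1 - q) * e * n ^+ 2) + e * dd * (m * u * 0)) = 0.
Proof. by move=> d0; field. Qed.

Unset Implicit Arguments. Set Strict Implicit.

Theorem mainTheorem6 (R : realType) (N h : nat)
  (sigma : 'I_h -> 'I_N -> 'rV[R]_N -> R)
  (beta : 'I_N -> R) (d : 'rV[R]_N -> R) :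
  (h <= N)%N ->
  (forall i j, C1_partials (sigma i j)) ->
  (forall j, 0 < beta j) ->
  (forall (f : 'rV[R]_N -> R), Cinf_on setT f ->
     forall (lam : R), 0 < lam -> forall (i : 'I_h) (x : 'rV[R]_N),
       Xfield sigma i (f \o dil beta lam) x
       = lam * Xfield sigma i f (dil beta lam x)) ->
  let Q := \sum_(j < N) beta j in
  (forall x, 0 <= d x) ->
  continuous d ->
  Cinf_on [set x | x != 0] d ->
  (forall x, d x = 0 <-> x = 0) ->
  (forall (lam : R) x, 0 < lam -> d (dil beta lam x) = lam * d x) ->
  (forall p : R, 2 <= p ->
     (p != Q -> forall x, x != 0 ->
        Lp sigma p (fun y => powR (d y) ((p - Q) / (p - 1))) x = 0) /\
     (p = Q -> forall x, x != 0 ->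
        Lp sigma Q (fun y => - ln (d y)) x = 0)) ->
  forall (p alpha : R), 2 <= p -> 0 <= alpha ->
  forall x : 'rV[R]_N, x != 0 ->
    Lp sigma p d x = (Q - 1) * powR (enorm (gradL sigma d x)) p / d x /\
    edot (gradL sigma (fun y => enorm (gradL sigma d y)) x) (gradL sigma d x) = 0 /\
    divL sigma (fun y => (powR (enorm (gradL sigma d y)) (alpha + p - 2)
                           / powR (d y) (Q - 1)) *: gradL sigma d y) x = 0.
Proof.
move=> hN Hs Hb Hhom Q Hdge cd Hd Hd0 Hdil Hhyp p alpha p2 a0 x x0.
have dpos y : y != 0 -> 0 < d y.
  by move=> y0; rewrite lt_neqAle Hdge andbT eq_sym; apply/eqP => /Hd0 /eqP; rewrite (negPf y0).
have dx0 : d x != 0 by rewrite gt_eqF // dpos.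
pose G := gradL sigma d.
pose nG := fun y => enorm (G y).
have conc1 : forall q, 2 <= q -> (q = 2 \/ 0 < nG x) ->
    Lp sigma q d x = (Q - 1) * powR (nG x) q / d x.
  move=> q q2 qc; apply: K1 => //.
  - by move=> qQ; exact: ((Hhyp q q2).1 qQ x x0).
  - by move=> qQ; exact: ((Hhyp q q2).2 qQ x x0).
  move=> j; case: qc => [->|np].
    rewrite subrr.
    have -> : (fun y => powR (enorm (gradL sigma d y)) 0) = cst 1.
      by apply/funext => y; rewrite powRr0.
    exact: derivable_cst.
  by apply: powR_der => //; exact: nG_der.
have LpG : Lp sigma 2 d x = divL sigma G x.
  rewrite /Lp; congr divL; apply/funext => y.
  by rewrite subrr powRr0 scale1r.
have L2 : divL sigma G x = (Q - 1) * nG x ^+ 2 / d x.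
  by rewrite -LpG conc1 ?lexx //; [rewrite powR_mulrn ?enorm_ge0 | left].
have [np|nz] := ltP 0 (nG x); last first.
  have n0 : nG x = 0 by apply/eqP; rewrite eq_le nz enorm_ge0.
  have n0' : enorm (gradL sigma d x) = 0 by exact: n0.
  have G0 : G x = 0 := enorm_eq0 n0.
  have G0' : gradL sigma d x = 0 := G0.
  have dGc := fun j => G_comp_der (j:=j) Hs Hd x0.
  have L20 : divL sigma G x = 0 by rewrite L2 n0 expr0n /= mulr0 mul0r.
  have lim : forall s, 0 < s -> forall j,
      (fun t : R => powR (nG (t *: ej R j + x)) s) @ 0^' --> powR (nG x) s.
    move=> s s0 j; rewrite n0 powR0 ?gt_eqF //.
    apply: powR_cvg0' => //; first by move=> t; exact: enorm_ge0.
    by have := @nG_line R h N sigma d x j Hs Hd x0; rewrite -/(nG x) n0.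
  have dB : forall j, derivable (fun y => powR (d y) (1 - Q)) x (ej R j).
    by move=> j; apply: powR_der; [exact: d_der | exact: dpos].
  split.
    have [->|p2'] := eqVneq p 2; first by apply: conc1 => //; left.
    have pg : 0 < p - 2 by rewrite subr_gt0 lt_neqAle eq_sym p2' p2.
    rewrite /Lp (divL_scale0 (g := fun y => powR (nG y) (p - 2)) (Z := G) dGc G0 (lim _ pg)).
    by rewrite L20 mulr0 n0' powR0 ?mulr0 ?mul0r // gt_eqF // (lt_le_trans _ p2).
  split; first by rewrite G0' edot0r.
  have [s0|sp] := eqVneq (alpha + p - 2) 0.
    have -> : (fun y => (powR (enorm (gradL sigma d y)) (alpha + p - 2)
                           / powR (d y) (Q - 1)) *: gradL sigma d y) =
        (fun y => powR (d y) (1 - Q) *: G y).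
      by apply/funext => y; rewrite s0 powRr0 mul1r -powRN opprB.
    rewrite (divL_scale (g := fun y => powR (d y) (1 - Q)) (Z := G) dB dGc).
    by rewrite L20 G0 edot0r mulr0 addr0.
  have sg : 0 < alpha + p - 2.
    by rewrite lt_neqAle eq_sym sp /= -addrA addr_ge0 // subr_ge0.
  have -> : (fun y => (powR (enorm (gradL sigma d y)) (alpha + p - 2)
                         / powR (d y) (Q - 1)) *: gradL sigma d y) =
      (fun y => powR (nG y) (alpha + p - 2) *: (powR (d y) (1 - Q) *: G y)).
    by apply/funext => y; rewrite scalerA -powRN opprB.
  have dZ := fun j => W_der (j:=j) Hs Hd x0 (dB j).
  have Z0 : powR (d x) (1 - Q) *: G x = 0 by rewrite G0 scaler0.
  rewrite (divL_scale0 (g := fun y => powR (nG y) (alpha + p - 2))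
     (Z := fun y => powR (d y) (1 - Q) *: G y) dZ Z0 (lim _ sg)).
  by rewrite n0 powR0 ?mul0r // gt_eqF.
have dnG : forall j, derivable nG x (ej R j) by move=> j; exact: nG_der.
have dGc := fun j => G_comp_der (j:=j) Hs Hd x0.
split; first by apply: conc1 => //; right.
have E2 : edot (gradL sigma nG x) (G x) = 0.
  have L3 : Lp sigma 3 d x = (Q - 1) * nG x ^+ 3 / d x.
    by rewrite conc1 ?ler_nat //; [rewrite powR_mulrn ?enorm_ge0 | right].
  have E3 : Lp sigma 3 d x = divL sigma (fun y => nG y *: G y) x.
    rewrite /Lp; congr divL; apply/funext => y.
    have -> : (3 : R) - 2 = 1 by ring.
    by rewrite powRr1 ?enorm_ge0.
  rewrite divL_scale // L2 L3 in E3.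
  have : edot (gradL sigma nG x) (G x) = (Q - 1) * nG x ^+ 3 / d x - nG x * ((Q - 1) * nG x ^+ 2 / d x).
    by rewrite E3 [nG x * _ + _]addrC addrK.
  move=> ->; field; exact: dx0.
split; first exact: E2.
have -> : (fun y => (powR (enorm (gradL sigma d y)) (alpha + p - 2)
                           / powR (d y) (Q - 1)) *: gradL sigma d y) =
    (fun y => (powR (nG y) (alpha + p - 2) * powR (d y) (1 - Q)) *: G y).
  apply/funext => y; congr (_ *: _); congr (_ * _).
  by rewrite -powRN opprB.
have dA : forall j, derivable (fun y => powR (nG y) (alpha + p - 2)) x (ej R j).
  by move=> j; apply: powR_der.
have dB : forall j, derivable (fun y => powR (d y) (1 - Q)) x (ej R j).
  by move=> j; apply: powR_der; [exact: d_der | exact: dpos].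
have dAB : forall j, derivable (fun y => powR (nG y) (alpha + p - 2) * powR (d y) (1 - Q)) x (ej R j).
  by move=> j; apply: derivableM'.
rewrite (divL_scale (g := fun y => powR (nG y) (alpha + p - 2) * powR (d y) (1 - Q)) (Z := G) dAB dGc).
rewrite (gradLM (f := fun y => powR (nG y) (alpha + p - 2)) (g := fun y => powR (d y) (1 - Q)) sigma dA dB).
have HA := @gradL_chain R h N sigma nG (fun u => powR u (alpha + p - 2)) x _ dnG
  (@is_derive1_powR R (alpha + p - 2) _ np).
have HB := @gradL_chain R h N sigma d (fun u => powR u (1 - Q)) x _ (fun j => d_der (j:=j) Hd x0)
  (@is_derive1_powR R (1 - Q) _ (dpos x x0)).
rewrite /= in HA HB; rewrite HA HB.
rewrite edotDl !edotZl E2 edot_self L2.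
have Ed : d x `^ (1 - Q) = d x `^ (1 - Q - 1) * d x.
  by rewrite -{3}(powRr1 (Hdge x)) -powRD' ?dpos // subrK.
rewrite Ed; exact: alg3.
Qed.
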